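(* Let $G$ be a graph without isolated vertices such that $d_G(u)+d_G(v)\ge 4$ for every edge $uv$ of $G$. Consider any stage of the total domination game on $G$ (starting with all vertices white) at which every legal move has value at most $4$, and let $R$ be the residual graph at this stage. Then every component $C$ of $R$ satisfies one of the following: (a) $C\cong P_4$, with both leaves blue and both internal vertices white; (b) $C\cong P_3$, with both leaves blue and the central vertex green; (c) $C\cong P_2$, with one vertex blue and the other green; (d) $C\cong P_2$, with one vertex blue and the other white.
   Context: The total domination game on a graph $G$ without isolated vertices: Dominator and Staller alternately choose vertices (Dominator first); a chosen vertex must be adjacent to at least one vertex not adjacent to any previously chosen vertex (such a vertex is a legal move); the game ends when every vertex of $G$ has a neighbor among the chosen vertices. At any stage, let $D$ be the set of vertices chosen so far. Each vertex is colored: white if it has no neighbor in $D$ and is not in $D$; green if it has no neighbor in $D$ but is in $D$; blue if it has a neighbor in $D$ but some neighbor of it has no neighbor in $D$; red if it and all its neighbors have a neighbor in $D$. Weights: white $3$, green $2$, blue $1$, red $0$; the value of a legal move is the decrease in the total weight (sum of all vertex weights) caused by playing it. The residual graph $R$ is obtained from $G$ by deleting all red vertices and all edges joining two blue vertices, with vertices keeping their colors. *)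

(* Defs.v *)
From mathcomp Require Import all_boot.
Set Implicit Arguments. Unset Strict Implicit. Unset Printing Implicit Defensive.

Section TotalDomGame.
Variables (T : finType) (e : rel T).

Definition simple_graph : Prop := symmetric e /\ irreflexive e.
Definition no_isolated : Prop := forall v : T, exists u, e v u.
Definition deg (v : T) : nat := #|[set u | e v u]|.

(* D : seq T is the list of vertices chosen so far *)
Definition dominated (D : seq T) (v : T) : bool := has (e v) D.

Definition legal (D : seq T) (x : T) : bool := [exists u, e x u && ~~ dominated D u].

Fixpoint legal_from (D : seq T) (s : seq T) : bool :=
  match s with
  | [::] => true
  | x :: s' => legal D x && legal_from (rcons D x) s'
  end.
Definition is_play (s : seq T) : bool := legal_from [::] s.

Definition white (D : seq T) (v : T) : bool := ~~ dominated D v && (v \notin D).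
Definition green (D : seq T) (v : T) : bool := ~~ dominated D v && (v \in D).
Definition blue (D : seq T) (v : T) : bool :=
  dominated D v && [exists u, e v u && ~~ dominated D u].
Definition red (D : seq T) (v : T) : bool :=
  dominated D v && [forall u, e v u ==> dominated D u].

Definition weight (D : seq T) (v : T) : nat :=
  if white D v then 3 else if green D v then 2 else if blue D v then 1 else 0.
Definition total_weight (D : seq T) : nat := \sum_(v : T) weight D v.

(* "value of x at most 4": total_weight D - total_weight (D ++ [x]) <= 4 (over integers) *)
Definition value_le4 (D : seq T) (x : T) : Prop :=
  total_weight D <= total_weight (rcons D x) + 4.

(* residual graph: non-red vertices; G-edges between them except blue-blue edges *)
Definition Redge (D : seq T) : rel T := fun x y =>
  [&& e x y, ~~ red D x, ~~ red D y & ~~ (blue D x && blue D y)].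

Definition Rcomp (D : seq T) (v : T) : {set T} := [set u | connect (Redge D) v u].

Definition adj2 (a b x y : T) : bool := ((x == a) && (y == b)) || ((x == b) && (y == a)).

Definition comp_P4 (D : seq T) (C : {set T}) : Prop :=
  exists a b c d : T,
    [/\ uniq [:: a; b; c; d], C = [set a; b; c; d],
        (forall x y, x \in C -> y \in C -> Redge D x y = [|| adj2 a b x y, adj2 b c x y | adj2 c d x y]),
        blue D a && blue D d & white D b && white D c].

Definition comp_P3 (D : seq T) (C : {set T}) : Prop :=
  exists a b c : T,
    [/\ uniq [:: a; b; c], C = [set a; b; c],
        (forall x y, x \in C -> y \in C -> Redge D x y = adj2 a b x y || adj2 b c x y),
        blue D a && blue D c & green D b].

Definition comp_P2 (D : seq T) (C : {set T}) (col : seq T -> T -> bool) : Prop :=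
  exists a b : T,
    [/\ a != b, C = [set a; b],
        (forall x y, x \in C -> y \in C -> Redge D x y = adj2 a b x y),
        blue D a & col D b].

End TotalDomGame.

(* Main.v *)
Require Import Defs.
From mathcomp Require Import all_boot zify.
Set Implicit Arguments. Unset Strict Implicit. Unset Printing Implicit Defensive.

Section Proof.
Variables (T : finType) (e : rel T).
Hypotheses (sym : symmetric e) (irr : irreflexive e).

Lemma weightE D x : weight e D x =
  if ~~ dominated e D x then (if x \in D then 2 else 3)
  else (if [exists u, e x u && ~~ dominated e D u] then 1 else 0).
Proof.
rewrite /weight /white /green /blue /red.
by case: (dominated e D x); case: (x \in D); case: [exists u, _].
Qed.

Lemma domE D p x : dominated e (rcons D p) x = e x p || dominated e D x.
Proof. by rewrite /dominated has_rcons. Qed.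

Lemma memE (D : seq T) p x : (x \in rcons D p) = (x == p) || (x \in D).
Proof. by rewrite mem_rcons in_cons. Qed.

Lemma w_mono D p x : weight e (rcons D p) x <= weight e D x.
Proof.
rewrite !weightE domE memE.
case: (dominated e D x) => /=.
  rewrite orbT /=.
  case: existsP => [[u /andP [xu]]|]; last by case: ifP.
  rewrite domE negb_or => /andP [_ hu].
  by case: existsP => // [[]]; exists u; rewrite xu.
case: (e x p) => /=; first by case: ifP; case: ifP.
by case: (x == p); case: (x \in D).
Qed.

Lemma w_zero D p x : dominated e (rcons D p) x ->
  (forall y, e x y -> dominated e (rcons D p) y) -> weight e (rcons D p) x = 0.
Proof.
move=> hx hy; rewrite weightE hx /=.
case: existsP => // [[u /andP [xu]]]; by rewrite hy.
Qed.

Lemma sum_drop D p (l : seq T) : uniq l ->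
  total_weight e (rcons D p) + \sum_(x <- l) (weight e D x - weight e (rcons D p) x)
  <= total_weight e D.
Proof.
move=> ul; rewrite big_uniq // big_mkcond /total_weight -big_split /=.
apply: leq_sum => x _; have := w_mono D p x; case: ifP => _; lia.
Qed.

Variable D : seq T.
Hypothesis Hval : forall x, legal e D x -> value_le4 e D x.
Local Notation dom := (dominated e D).

Lemma legalI p u : e p u -> ~~ dom u -> legal e D p.
Proof. by move=> pu hu; apply/existsP; exists u; rewrite pu. Qed.

Lemma contra_drop p (l : seq T) : legal e D p -> uniq l ->
  5 <= \sum_(x <- l) (weight e D x - weight e (rcons D p) x) -> False.
Proof.
move=> /Hval; rewrite /value_le4 => h ul; have := sum_drop D p ul; lia.
Qed.

Lemma dom_nbr y x : e y x -> x \in D -> dom y.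
Proof. by move=> yx xD; apply/hasP; exists x. Qed.

Lemma notinD x y : ~~ dom x -> e x y -> y \notin D.
Proof. by move=> hx xy; apply: contra hx => yD; apply: dom_nbr xy yD. Qed.

Lemma neq_dom x y : dom x -> ~~ dom y -> x != y.
Proof. by move=> hx hy; apply: contraNneq hy => <-. Qed.

Lemma neq_e x y : e x y -> x != y.
Proof. by move=> xy; apply: contraTneq xy => ->; rewrite irr. Qed.

Lemma drop_U p x : ~~ dom x -> e x p ->
  weight e (rcons D p) x + 2 <= weight e D x.
Proof.
move=> hx xp; case xD: (x \in D).
  rewrite w_zero ?domE ?xp //; last first.
    by move=> y xy; rewrite domE (@dom_nbr y x) ?orbT // sym.
  by move: hx; rewrite weightE xD; case: (dominated e D x).
rewrite (weightE D) (negbTE hx) xD (weightE (rcons D p)) domE xp /=; by case: ifP.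
Qed.

Lemma dom_rc p y : dom y -> dominated e (rcons D p) y.
Proof. by move=> hy; rewrite domE hy orbT. Qed.

Lemma drop_played p u : dom p -> e p u -> ~~ dom u ->
  weight e (rcons D p) p + 1 <= weight e D p.
Proof.
move=> hp pu hu; rewrite w_zero ?dom_rc //; last first.
  by move=> y py; rewrite domE sym py.
rewrite weightE hp /=; case: existsP => // [[]]; exists u; by rewrite pu.
Qed.

Lemma drop_wp p : ~~ dom p -> p \notin D ->
  weight e (rcons D p) p + 1 <= weight e D p.
Proof.
move=> hp pD; rewrite (weightE D) (negbTE hp) (negbTE pD) (weightE (rcons D p)).
by rewrite domE irr (negbTE hp) memE eqxx.
Qed.

Lemma esym x y : e x y -> e y x.
Proof. by rewrite sym. Qed.

Lemma K1 b x y : dom b -> e b x -> e b y -> ~~ dom x -> ~~ dom y -> x = y.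
Proof.
move=> hb bx bY hx hy; apply/eqP; apply: contraT => nxy; exfalso.
apply: (@contra_drop b [:: x; y; b]); first exact: legalI bx hx.
  by rewrite /= !inE negb_or nxy !(eq_sym _ b) !neq_dom.
rewrite !big_cons big_nil.
have := drop_U hx (esym bx). have := drop_U hy (esym bY).
have := drop_played hb bx hx. lia.
Qed.

Lemma drop_blue p b u : dom b -> ~~ dom u -> e b u -> e u p ->
  weight e (rcons D p) b + 1 <= weight e D b.
Proof.
move=> hb hu bu up; rewrite w_zero ?dom_rc //; last first.
  move=> y bY; case hy: (dom y); first by rewrite dom_rc.
  by rewrite (@K1 b y u) ?hy // domE up.
rewrite weightE hb /=; case: existsP => // [[]]; exists u; by rewrite bu.
Qed.

Lemma K3 u b1 b2 b3 : u \in D -> ~~ dom u -> e u b1 -> e u b2 -> e u b3 ->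
  uniq [:: b1; b2; b3] -> False.
Proof.
move=> uD hu u1 u2 u3 ub.
have d1 : dom b1 by apply: (dom_nbr _ uD); rewrite sym.
have d2 : dom b2 by apply: (dom_nbr _ uD); rewrite sym.
have d3 : dom b3 by apply: (dom_nbr _ uD); rewrite sym.
apply: (@contra_drop b1 [:: u; b1; b2; b3]).
  exact: legalI (esym u1) hu.
  by rewrite cons_uniq ub !inE !negb_or !(eq_sym u) !neq_dom.
rewrite !big_cons big_nil.
have := drop_U hu u1.
have := @drop_blue b1 b1 u d1 hu (esym u1) u1.
have := @drop_blue b1 b2 u d2 hu (esym u2) u1.
have := @drop_blue b1 b3 u d3 hu (esym u3) u1. lia.
Qed.

Lemma K4 u w1 w2 : ~~ dom u -> u \notin D -> e u w1 -> e u w2 ->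
  ~~ dom w1 -> ~~ dom w2 -> w1 != w2 -> False.
Proof.
move=> hu uD u1 u2 h1 h2 n12.
apply: (@contra_drop u [:: u; w1; w2]); first exact: legalI u1 h1.
  by rewrite /= !inE !negb_or n12 !neq_e.
rewrite !big_cons big_nil.
have := drop_wp hu uD. have := drop_U h1 (esym u1).
have := drop_U h2 (esym u2). lia.
Qed.

Lemma K5 u w y1 y2 : ~~ dom u -> ~~ dom w -> e u w -> dom y1 -> dom y2 ->
  e u y1 -> e u y2 -> y1 != y2 -> False.
Proof.
move=> hu hw uw d1 d2 u1 u2 n12.
have wD := notinD hu uw.
apply: (@contra_drop w [:: u; w; y1; y2]).
  exact: legalI (esym uw) hu.
  by rewrite /= !inE !negb_or n12 (neq_e uw) [u == y1]eq_sym [u == y2]eq_sym [w == y1]eq_sym [w == y2]eq_sym !neq_dom.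
rewrite !big_cons big_nil.
have := drop_U hu uw. have := drop_wp hw wD.
have := @drop_blue w y1 u d1 hu (esym u1) uw.
have := @drop_blue w y2 u d2 hu (esym u2) uw. lia.
Qed.

Lemma K6 u b1 b2 : ~~ dom u -> u \notin D -> (forall y, e u y -> dom y) ->
  e u b1 -> e u b2 -> b1 != b2 -> False.
Proof.
move=> hu uD hn u1 u2 n12.
have d1 := hn _ u1; have d2 := hn _ u2.
apply: (@contra_drop b1 [:: u; b1; b2]).
  exact: legalI (esym u1) hu.
  by rewrite /= !inE !negb_or n12 !(eq_sym u) !neq_dom.
rewrite !big_cons big_nil.
have h0 : weight e (rcons D b1) u = 0.
  by apply: w_zero => [|y uy]; [rewrite domE u1 | rewrite dom_rc // hn].
have h3 : weight e D u = 3 by rewrite weightE (negbTE hu) (negbTE uD).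
have := @drop_blue b1 b1 u d1 hu (esym u1) u1.
have := @drop_blue b1 b2 u d2 hu (esym u2) u1. lia.
Qed.


Local Notation R := (Redge e D).

Lemma Redge_sym : symmetric R.
Proof.
move=> x y; rewrite /Redge sym; case: (e y x) => //=.
by case: (red e D x); case: (red e D y); case: (blue e D x); case: (blue e D y).
Qed.

Lemma RedgeU x y : ~~ dom x -> R x y = e x y.
Proof.
move=> hx; rewrite /Redge; case exy: (e x y) => //=.
rewrite /red /blue (negbTE hx) /=.
rewrite andbT; apply/negP => /andP [_ /forallP /(_ x)]; by rewrite sym exy /= (negbTE hx).
Qed.

Lemma RedgeUr x y : ~~ dom y -> R x y = e x y.
Proof. by move=> hy; rewrite Redge_sym RedgeU // sym. Qed.

Lemma Redge_refl x : R x x = false.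
Proof. by rewrite /Redge irr. Qed.

Lemma Redge_bb x y : blue e D x -> blue e D y -> R x y = false.
Proof. by move=> bx bY; rewrite /Redge bx bY /= !andbF. Qed.

Lemma blueI b u : dom b -> e b u -> ~~ dom u -> blue e D b.
Proof. by move=> hb bu hu; rewrite /blue hb; apply/existsP; exists u; rewrite bu. Qed.

Lemma dnr_blue x : dom x -> ~~ red e D x -> blue e D x.
Proof.
move=> hx; rewrite /red hx /= => /forallPn [z].
by rewrite negb_imply => /andP [xz hz]; apply: blueI hx xz hz.
Qed.

Lemma Redge_blue b y : dom b -> R b y -> ~~ dom y /\ e b y.
Proof.
move=> hb; rewrite /Redge => /and4P [eby nrb nry nbb]; split => //.
apply/negP => hy; move: nbb.
by rewrite (dnr_blue hy nry) (dnr_blue hb nrb).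
Qed.

Lemma blue_out b u y : dom b -> e b u -> ~~ dom u -> R b y -> y = u.
Proof.
move=> hb bu hu /(Redge_blue hb) [hy bY]; exact: K1 hb bY bu hy hu.
Qed.

Lemma comp_eq u (S : {set T}) : u \in S ->
  (forall x y, x \in S -> R x y -> y \in S) ->
  (forall z, z \in S -> connect R u z) -> Rcomp e D u = S.
Proof.
move=> uS cl cn; apply/setP => z; rewrite inE; apply/idP/idP; last exact: cn.
have clS : closed R (mem S).
  move=> x y xy; apply/idP/idP => [/cl|]; first exact.
  by move=> yS; apply: (cl y x yS); rewrite Redge_sym.
by move=> /(closed_connect clS) <-.
Qed.

Lemma Rcomp_move v u : connect R v u -> Rcomp e D v = Rcomp e D u.
Proof.
have cs := sym_connect_sym Redge_sym.
move=> vu; apply/setP => z; rewrite !inE; apply/idP/idP => h.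
  by apply: connect_trans h; rewrite cs.
exact: connect_trans vu h.
Qed.


Hypothesis noiso : forall v : T, exists u, e v u.
Hypothesis hdeg : forall u v : T, e u v -> 4 <= deg e u + deg e v.

Lemma nd u w : ~~ dom u -> ~~ dom w -> e u w -> forall y, e u y -> y != w -> dom y.
Proof.
move=> hu hw uw y uy yw; case hy: (dom y) => //; exfalso.
apply: (K4 hu (notinD hw (esym uw)) uw uy hw (negbT hy)); by rewrite eq_sym.
Qed.

Lemma WW u w : ~~ dom u -> ~~ dom w -> e u w ->
  exists a, [/\ e u a, dom a & forall y, e u y -> y != w -> y = a].
Proof.
move=> hu hw uw.
have uq : forall y1 y2, e u y1 -> y1 != w -> e u y2 -> y2 != w -> y1 = y2.
  move=> y1 y2 u1 w1 u2 w2; apply/eqP; apply: contraT => n; exfalso.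
  exact: (K5 hu hw uw (nd hu hw uw u1 w1) (nd hu hw uw u2 w2) u1 u2 n).
case: (boolP [exists y, e u y && (y != w)]) => [/existsP [a /andP [ua aw]] | none].
  exists a; split => //; [exact: (@nd u w hu hw uw a ua aw) | move=> y uy yw; exact: uq].
exfalso; move/existsPn: none => none.
have du : deg e u <= 1.
  rewrite /deg -(cards1 w); apply: subset_leq_card; apply/subsetP => y.
  rewrite !inE => uy; case: eqP => // /eqP yw; by move: (none y); rewrite uy yw.
have := hdeg uw; rewrite {2}/deg (cardsD1 u) inE (esym uw) /= => h.
have : 1 < #|[set y | e w y] :\ u| by lia.
case/card_gt1P => y1 [y2 []]; rewrite !inE => /andP [n1 w1] /andP [n2 w2] n12.
exact: (K5 hw hu (esym uw) (nd hw hu (esym uw) w1 n1) (nd hw hu (esym uw) w2 n2) w1 w2 n12).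
Qed.


Ltac simp_all := repeat (match goal with
 | H : is_true (~~ (?x == ?y)) |- context [?x == ?y] => rewrite (negbTE H)
 | H : is_true (~~ (?x == ?y)) |- context [?y == ?x] => rewrite [y == x]eq_sym (negbTE H)
 | H : is_true (e ?x ?y) |- context [e ?x ?y] => rewrite H
 | H : is_true (e ?x ?y) |- context [e ?y ?x] => rewrite (esym H)
 | H : e ?x ?y = false |- context [e ?x ?y] => rewrite H
 end).

Ltac rsolve h1 h2 := rewrite ?Redge_refl; try rewrite (@RedgeU _ _ h1); try rewrite (@RedgeUr _ _ h1);
  try rewrite (@RedgeU _ _ h2); try rewrite (@RedgeUr _ _ h2); rewrite /adj2 ?eqxx; simp_all.

Lemma main v : ~~ red e D v ->
  [\/ comp_P4 e D (Rcomp e D v), comp_P3 e D (Rcomp e D v),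
      comp_P2 e D (Rcomp e D v) (@green T e) | comp_P2 e D (Rcomp e D v) (@white T e)].
Proof.
move=> nrv.
have [u [hu vu]] : exists u, ~~ dom u /\ connect R v u.
  case hv: (dom v).
    move: (dnr_blue hv nrv) => /andP [_ /existsP [y /andP [vy hy]]].
    by exists y; split => //; apply: connect1; rewrite RedgeUr.
  by exists v; split; [rewrite hv | exact: connect0].
rewrite (Rcomp_move vu).
case uD: (u \in D).
  have [b1 ub1] := noiso u.
  have d1 : dom b1 := dom_nbr (esym ub1) uD.
  have n1u := neq_dom d1 hu.
  have bl1 := blueI d1 (esym ub1) hu.
  case: (boolP [exists b, e u b && (b != b1)]) => [/existsP [b2 /andP [ub2 n21]] | none].
    have d2 : dom b2 := dom_nbr (esym ub2) uD.
    have n2u := neq_dom d2 hu.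
    have bl2 := blueI d2 (esym ub2) hu.
    case: (boolP [exists b, [&& e u b, b != b1 & b != b2]]) => [/existsP [b3 /and3P [ub3 n31 n32]] | none3].
      exfalso; apply: (K3 uD hu ub1 ub2 ub3).
      by rewrite /= !inE !negb_or ![b1 == _]eq_sym [b2 == b3]eq_sym n21 n31 n32.
    have nbr : forall y, e u y -> y = b1 \/ y = b2.
      move/existsPn: none3 => h y uy; move: (h y); rewrite uy /=.
      case: (eqVneq y b1) => [->|m1]; [by left|].
      case: (eqVneq y b2) => [->|m2]; [by right|]; by [].
    have CS : Rcomp e D u = [set b1; u; b2].
      apply: comp_eq.
      + by rewrite !inE eqxx !orbT.
      + move=> x y; rewrite !inE -!orbA => /or3P [] /eqP -> h.
        * by rewrite (blue_out d1 (esym ub1) hu h) eqxx !orbT.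
        * by rewrite RedgeU in h => //; case: (nbr _ h) => ->; rewrite eqxx ?orbT.
        * by rewrite (blue_out d2 (esym ub2) hu h) eqxx !orbT.
      + move=> z; rewrite !inE -!orbA => /or3P [] /eqP ->; try exact: connect0;
          by apply: connect1; rewrite RedgeU.
    apply: Or42; exists b1, u, b2; rewrite CS; split => //.
    - by rewrite /= !inE !negb_or n1u [b1 == b2]eq_sym n21 [u == b2]eq_sym n2u.
    - move=> x y; rewrite !inE -!orbA => /or3P [] /eqP -> /or3P [] /eqP ->;
        try rewrite (Redge_bb bl1 bl2); try rewrite (Redge_bb bl2 bl1); rsolve hu hu; by [].
    - by rewrite bl1 bl2.
    - by rewrite /green hu uD.
  have nbr : forall y, e u y -> y = b1.
    move/existsPn: none => h y uy; move: (h y); rewrite uy /=.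
    by case: (eqVneq y b1).
  have CS : Rcomp e D u = [set b1; u].
    apply: comp_eq.
    + by rewrite !inE eqxx !orbT.
    + move=> x y; rewrite !inE => /orP [] /eqP -> h.
      * by rewrite (blue_out d1 (esym ub1) hu h) eqxx !orbT.
      * by rewrite RedgeU in h => //; rewrite (nbr _ h) eqxx ?orbT.
    + move=> z; rewrite !inE => /orP [] /eqP ->; try exact: connect0;
        by apply: connect1; rewrite RedgeU.
  apply: Or43; exists b1, u; rewrite CS; split => //.
  - move=> x y; rewrite !inE => /orP [] /eqP -> /orP [] /eqP ->; rsolve hu hu; by [].
  - by rewrite /green hu uD.
case: (boolP [exists w, e u w && ~~ dom w]) => [/existsP [w /andP [uw hw]] | noW].
  have [a [ua da ha]] := WW hu hw uw.
  have [d [wd dd hd]] := WW hw hu (esym uw).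
  have bla := blueI da (esym ua) hu.
  have bld := blueI dd (esym wd) hw.
  have naw : e a w = false.
    apply/negP => aw; have E := K1 da (esym ua) aw hu hw; by move: uw; rewrite E irr.
  have nwa : e w a = false by rewrite sym.
  have nud : e u d = false.
    apply/negP => ud; have E := K1 dd (esym wd) (esym ud) hw hu; by move: uw; rewrite E irr.
  have ndu : e d u = false by rewrite sym.
  have nau := neq_dom da hu. have naw' := neq_dom da hw.
  have ndu' := neq_dom dd hu. have ndw := neq_dom dd hw. have nuw := neq_e uw.
  have nad : a != d by apply/eqP => E; move: naw; rewrite E sym wd.
  have CS : Rcomp e D u = [set a; u; w; d].
    apply: comp_eq.
    + by rewrite !inE eqxx !orbT.
    + move=> x y; rewrite !inE -!orbA => /or4P [] /eqP -> h.
      * by rewrite (blue_out da (esym ua) hu h) eqxx !orbT.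
      * rewrite RedgeU in h => //; case: (eqVneq y w) => [->|yw]; first by rewrite ?eqxx !orbT.
        by rewrite (ha _ h yw) eqxx.
      * rewrite RedgeU in h => //; case: (eqVneq y u) => [->|yu]; first by rewrite ?eqxx !orbT.
        by rewrite (hd _ h yu) eqxx !orbT.
      * by rewrite (blue_out dd (esym wd) hw h) eqxx !orbT.
    + move=> z; rewrite !inE -!orbA => /or4P [] /eqP ->; try exact: connect0.
      * by apply: connect1; rewrite RedgeU.
      * by apply: connect1; rewrite RedgeU.
      * apply: (@connect_trans _ _ w u); apply: connect1; first by rewrite RedgeU.
        by rewrite RedgeU.
  apply: Or41; exists a, u, w, d; rewrite CS; split => //.
  - by rewrite /= !inE !negb_or nau naw' nad nuw [u == d]eq_sym ndu' [w == d]eq_sym ndw.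
  - move=> x y; rewrite !inE -!orbA => /or4P [] /eqP -> /or4P [] /eqP ->;
      try rewrite (Redge_bb bla bld); try rewrite (Redge_bb bld bla); rsolve hu hw; by [].
  - by rewrite bla bld.
  - by rewrite /white hu hw uD (notinD hu uw).
move/existsPn: noW => noW.
have hn : forall y, e u y -> dom y.
  by move=> y uy; move: (noW y); rewrite uy /= negbK.
have [b ub] := noiso u.
have db := hn _ ub.
have nbr : forall y, e u y -> y = b.
  move=> y uy; apply/eqP; apply: contraT => n; exfalso.
  exact: (K6 hu (negbT uD) hn uy ub n).
have blb := blueI db (esym ub) hu.
have nbu := neq_dom db hu.
have CS : Rcomp e D u = [set b; u].
  apply: comp_eq.
  + by rewrite !inE eqxx !orbT.
  + move=> x y; rewrite !inE => /orP [] /eqP -> h.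
    * by rewrite (blue_out db (esym ub) hu h) eqxx !orbT.
    * by rewrite RedgeU in h => //; rewrite (nbr _ h) eqxx ?orbT.
  + move=> z; rewrite !inE => /orP [] /eqP ->; try exact: connect0;
      by apply: connect1; rewrite RedgeU.
apply: Or44; exists b, u; rewrite CS; split => //.
- move=> x y; rewrite !inE => /orP [] /eqP -> /orP [] /eqP ->; rsolve hu hu; by [].
- by rewrite /white hu uD.
Qed.

End Proof.

Theorem claim2p2 (T : finType) (e : rel T) :
  simple_graph e ->
  no_isolated e ->
  (forall u v : T, e u v -> 4 <= deg e u + deg e v) ->
  forall s : seq T, is_play e s ->
  (forall x : T, legal e s x -> value_le4 e s x) ->
  forall v : T, ~~ red e s v ->
    let C := Rcomp e s v in
    [\/ comp_P4 e s C, comp_P3 e s C, comp_P2 e s C (@green T e)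
      | comp_P2 e s C (@white T e)].
Proof.
move=> [sym irr] noiso hdeg s _ hval v nrv C.
exact: (main sym irr hval noiso hdeg nrv).
Qed.
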